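(* Let $G$ be the two-player game with $A_i=\{a_{i1},a_{i2}\}$ and $\pi(a_{11},a_{21})=(5,5)$, $\pi(a_{11},a_{22})=(0,0)$, $\pi(a_{12},a_{21})=(0,0)$, $\pi(a_{12},a_{22})=(5,10)$. Then for every $p\in(0,1)$, the pure profile $(a_{11},a_{21})$ is stable for the degree of observability $p$ (although it is Pareto dominated by $(a_{12},a_{22})$).
   Context: Preference types: $\Theta=\mathbb{R}^A$, $A=A_1\times A_2$ (extended bilinearly; $\pi_i$ likewise). $\mathcal{M}(\Theta^2)$: product distributions $\mu=\mu_1\times\mu_2$ with finitely supported marginals; $\mu(\theta)=\mu_1(\theta_1)\mu_2(\theta_2)$, $\mu_{-i}=\mu_j$ ($j\ne i$). Mutants: for nonempty $J\subseteq N=\{1,2\}$, $\tilde\theta_J\in\prod_{j\in J}(\Theta\setminus\operatorname{supp}\mu_j)$ with shares $\varepsilon\in(0,1)^{|J|}$, $\|\varepsilon\|=\max_j\varepsilon_j$; post-entry $\tilde\mu^\varepsilon_i=(1-\varepsilon_i)\mu_i+\varepsilon_i\delta_{\tilde\theta_i}$ for $i\in J$, $\mu_i$ otherwise. Partial observability with degree $p\in(0,1)$: each player independently observes opponents' types with probability $p$ and otherwise knows only $\mu_{-i}$. Strategies: $b:\operatorname{supp}\mu\to\prod_i\Delta(A_i)$ (play when observing) and $s_i:\operatorname{supp}\mu_i\to\Delta(A_i)$ (play when not observing), $s(\theta)=(s_i(\theta_i))_i$. For a matched profile $\theta$ and the set $T\subseteq N$ of non-observing players, the profile played is $(s(\theta)_T,b(\theta)_{-T})$.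 $(b,s)$ is an equilibrium if for all $\theta\in\operatorname{supp}\mu$ and $i$: $b_i(\theta)\in\arg\max_{\sigma_i}\sum_{T\subseteq N\setminus\{i\}}p^{n-1-|T|}(1-p)^{|T|}\theta_i(\sigma_i,(s_{-i}(\theta_{-i})_T,b_{-i}(\theta)_{-T}))$ and $s_i(\theta_i)\in\arg\max_{\sigma_i}\sum_{\theta'_{-i}}\mu_{-i}(\theta'_{-i})\sum_{T\subseteq N\setminus\{i\}}p^{n-1-|T|}(1-p)^{|T|}\theta_i(\sigma_i,(s_{-i}(\theta'_{-i})_T,b_{-i}(\theta_i,\theta'_{-i})_{-T}))$ (here $n=2$); $B_p(\mu)$ is the set of these; $(\mu,b,s)$ is a configuration. Aggregate outcome: $\varphi_{\mu,b,s}(a)=\sum_{\theta}\mu(\theta)\sum_{T\subseteq N}p^{n-|T|}(1-p)^{|T|}\prod_i(s(\theta)_T,b(\theta)_{-T})_i(a_i)$. Average fitness: $\Pi_{\theta_i}(\mu;b,s)=\sum_{\theta'_{-i}}\mu_{-i}(\theta'_{-i})\sum_{T\subseteq N}p^{n-|T|}(1-p)^{|T|}\pi_i(s(\theta_i,\theta'_{-i})_T,b(\theta_i,\theta'_{-i})_{-T})$. Balanced: equal average fitness of all types within each population. Nearby set: $B_p^\eta(\tilde\mu^\varepsilon;b,s)=\{(\tilde b,\tilde s)\in B_p(\tilde\mu^\varepsilon):\max_i\|\tilde b_i(\theta)-b_i(\theta)\|\le\eta,\ \max_i\|\tilde s_i(\theta_i)-s_i(\theta_i)\|\le\eta\ \forall\theta\in\operatorname{supp}\mu\}$.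 $(\mu,b,s)$ is stable (for degree $p$) if balanced and for every nonempty $J$, every $\tilde\theta_J$, every $\eta>0$, there are $\bar\eta\in[0,\eta)$, $\bar\epsilon\in(0,1)$ such that for all $\varepsilon$ with $\|\varepsilon\|\in(0,\bar\epsilon)$, $B_p^{\bar\eta}(\tilde\mu^\varepsilon;b,s)\ne\emptyset$ and each of its elements satisfies (i) some $j\in J$ has $\Pi_{\theta_j}>\Pi_{\tilde\theta_j}$ (post-entry) for all $\theta_j\in\operatorname{supp}\mu_j$, or (ii) for every $i$ all types in $\operatorname{supp}\tilde\mu^\varepsilon_i$ have equal post-entry average fitness. A pure profile $a^*$ is stable for degree $p$ if the point mass at $a^*$ is the aggregate outcome of a stable configuration for $p$. *)

(* Defs.v *)
From Stdlib Require Import Reals List.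
Open Scope R_scope.

(* Two players; player i's actions are a_{i1} = x1 and a_{i2} = x2. *)
Inductive player := P1 | P2.
Definition other (i : player) : player := match i with P1 => P2 | P2 => P1 end.
Definition peqb (i j : player) : bool :=
  match i, j with P1, P1 | P2, P2 => true | _, _ => false end.

Inductive act := x1 | x2.
Definition act_eqb (a b : act) : bool :=
  match a, b with x1, x1 | x2, x2 => true | _, _ => false end.

(* Preference types: Theta = R^A with A = A_1 x A_2; u a1 a2 = u(a1,a2). *)
Definition Theta := act -> act -> R.

Definition mixed := act -> R.
Definition in_simplex (sg : mixed) : Prop :=
  0 <= sg x1 /\ 0 <= sg x2 /\ sg x1 + sg x2 = 1.
Definition mdist (sg tau : mixed) : R :=
  Rmax (Rabs (sg x1 - tau x1)) (Rabs (sg x2 - tau x2)).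

Definition mprof := player -> mixed.
Definition ext (u : Theta) (sg : mprof) : R :=
  sg P1 x1 * sg P2 x1 * u x1 x1 + sg P1 x1 * sg P2 x2 * u x1 x2
  + sg P1 x2 * sg P2 x1 * u x2 x1 + sg P1 x2 * sg P2 x2 * u x2 x2.
Definition prof (i : player) (sg tau : mixed) : mprof :=
  fun k => if peqb k i then sg else tau.

Definition tc (th : Theta * Theta) (i : player) : Theta :=
  match i with P1 => fst th | P2 => snd th end.
Definition tpair (i : player) (ti tj : Theta) : Theta * Theta :=
  match i with P1 => (ti, tj) | P2 => (tj, ti) end.

(* finitely supported distributions on Theta: list of (type, weight) *)
Definition dist := list (Theta * R).
Definition supp (d : dist) : list Theta := map fst d.
Fixpoint Esum (d : dist) (f : Theta -> R) : R :=
  match d with nil => 0 | (t, w) :: d' => w * f t + Esum d' f end.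
Definition valid_dist (d : dist) : Prop :=
  NoDup (supp d) /\ Forall (fun tw => 0 < snd tw) d /\ Esum d (fun _ => 1) = 1.
(* product distribution mu = mu_1 x mu_2, given by its marginals *)
Definition pop := player -> dist.
Definition valid_pop (mu : pop) : Prop := valid_dist (mu P1) /\ valid_dist (mu P2).

(* strategies: b : supp mu -> prod_i Delta(A_i), s_i : supp mu_i -> Delta(A_i) *)
Definition bstrat := Theta * Theta -> player -> mixed.
Definition sstrat := player -> Theta -> mixed.

Definition ow (p : R) (o : bool) : R := if o then p else 1 - p.
Definition sum2 (f : bool -> R) : R := f true + f false.
Definition sum4 (f : bool -> bool -> R) : R :=
  f true true + f true false + f false true + f false false.
Definition obsf (o1 o2 : bool) : player -> bool :=
  fun k => match k with P1 => o1 | P2 => o2 end.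
Definition played (b : bstrat) (s : sstrat) (th : Theta * Theta)
  (o : player -> bool) : mprof :=
  fun k => if o k then b th k else s k (tc th k).

Definition U_obs (p : R) (b : bstrat) (s : sstrat) (th : Theta * Theta)
  (i : player) (sg : mixed) : R :=
  sum2 (fun o => ow p o * ext (tc th i)
    (prof i sg (if o then b th (other i) else s (other i) (tc th (other i))))).
Definition U_nobs (p : R) (mu : pop) (b : bstrat) (s : sstrat)
  (i : player) (ti : Theta) (sg : mixed) : R :=
  Esum (mu (other i)) (fun tj => U_obs p b s (tpair i ti tj) i sg).

Definition is_eq (p : R) (mu : pop) (b : bstrat) (s : sstrat) : Prop :=
  (forall t1 t2, In t1 (supp (mu P1)) -> In t2 (supp (mu P2)) ->
     forall i, in_simplex (b (t1, t2) i) /\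
       (forall sg, in_simplex sg ->
          U_obs p b s (t1, t2) i sg <= U_obs p b s (t1, t2) i (b (t1, t2) i)))
  /\
  (forall i ti, In ti (supp (mu i)) ->
     in_simplex (s i ti) /\
     (forall sg, in_simplex sg ->
        U_nobs p mu b s i ti sg <= U_nobs p mu b s i ti (s i ti))).

Definition agg (p : R) (mu : pop) (b : bstrat) (s : sstrat) (a1 a2 : act) : R :=
  Esum (mu P1) (fun t1 => Esum (mu P2) (fun t2 =>
    sum4 (fun o1 o2 => ow p o1 * ow p o2 *
      (played b s (t1, t2) (obsf o1 o2) P1 a1 *
       played b s (t1, t2) (obsf o1 o2) P2 a2)))).

Definition fitness (pi : player -> Theta) (p : R) (mu : pop) (b : bstrat)
  (s : sstrat) (i : player) (ti : Theta) : R :=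
  Esum (mu (other i)) (fun tj =>
    sum4 (fun o1 o2 => ow p o1 * ow p o2 *
      ext (pi i) (played b s (tpair i ti tj) (obsf o1 o2)))).

Definition balanced (pi : player -> Theta) (p : R) (mu : pop) (b : bstrat)
  (s : sstrat) : Prop :=
  forall i t t', In t (supp (mu i)) -> In t' (supp (mu i)) ->
    fitness pi p mu b s i t = fitness pi p mu b s i t'.

Definition entrant (d : dist) (t : Theta) (e : R) : dist :=
  (t, e) :: map (fun tw => (fst tw, (1 - e) * snd tw)) d.
Definition post (mu : pop) (J : player -> bool) (tt : player -> Theta)
  (eps : player -> R) : pop :=
  fun i => if J i then entrant (mu i) (tt i) (eps i) else mu i.

Definition nearby (p : R) (mu' mu : pop) (b : bstrat) (s : sstrat) (eta : R)
  (b' : bstrat) (s' : sstrat) : Prop :=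
  is_eq p mu' b' s' /\
  forall t1 t2, In t1 (supp (mu P1)) -> In t2 (supp (mu P2)) ->
    forall i, mdist (b' (t1, t2) i) (b (t1, t2) i) <= eta /\
              mdist (s' i (tc (t1, t2) i)) (s i (tc (t1, t2) i)) <= eta.

Definition stable (pi : player -> Theta) (p : R) (mu : pop) (b : bstrat)
  (s : sstrat) : Prop :=
  balanced pi p mu b s /\
  forall (J : player -> bool) (tt : player -> Theta),
    (exists j, J j = true) ->
    (forall j, J j = true -> ~ In (tt j) (supp (mu j))) ->
    forall eta, 0 < eta ->
      exists etab epsb, 0 <= etab < eta /\ 0 < epsb < 1 /\
        forall eps : player -> R,
          (forall j, J j = true -> 0 < eps j < 1) ->
          (forall j, J j = true -> eps j < epsb) ->
          (exists b' s', nearby p (post mu J tt eps) mu b s etab b' s') /\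
          (forall b' s', nearby p (post mu J tt eps) mu b s etab b' s' ->
             (exists j, J j = true /\
                forall tj, In tj (supp (mu j)) ->
                  fitness pi p (post mu J tt eps) b' s' j tj >
                  fitness pi p (post mu J tt eps) b' s' j (tt j))
             \/
             (forall i t t', In t (supp (post mu J tt eps i)) ->
                In t' (supp (post mu J tt eps i)) ->
                fitness pi p (post mu J tt eps) b' s' i t =
                fitness pi p (post mu J tt eps) b' s' i t')).

Definition stable_pure (pi : player -> Theta) (p : R) (a1 a2 : act) : Prop :=
  exists (mu : pop) (b : bstrat) (s : sstrat),
    valid_pop mu /\ is_eq p mu b s /\ stable pi p mu b s /\
    forall c1 c2, agg p mu b s c1 c2 =
      (if andb (act_eqb c1 a1) (act_eqb c2 a2) then 1 else 0).

Definition G (i : player) : Theta :=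
  match i with
  | P1 => fun a1 a2 => match a1, a2 with
          | x1, x1 => 5 | x1, x2 => 0 | x2, x1 => 0 | x2, x2 => 5 end
  | P2 => fun a1 a2 => match a1, a2 with
          | x1, x1 => 5 | x1, x2 => 0 | x2, x1 => 0 | x2, x2 => 10 end
  end.

(* Main.v *)
Require Import Defs.
From Stdlib Require Import Reals List Lra Psatz ClassicalDescription.
Open Scope R_scope.

Definition mk (q : R) : mixed := fun a => match a with x1 => 1 - q | x2 => q end.
Definition D1 : Theta := fun a1 a2 => match a1 with x1 => 1 | x2 => 0 end.
Definition D2 : Theta := fun a1 a2 => match a2 with x1 => 1 | x2 => 0 end.
Definition Dinc (i:player) : Theta := match i with P1 => D1 | P2 => D2 end.
Definition mu0 : pop := fun i => (Dinc i, 1) :: nil.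
Definition b0 : bstrat := fun _ _ => mk 0.
Definition s0 : sstrat := fun _ _ => mk 0.
Definition okBR (q g : R) : Prop := (1 - q) * g <= 0 /\ q * (- g) <= 0.
Definition gain (i : player) (t : Theta) (y : R) : R :=
  ext t (prof i (mk 1) (mk y)) - ext t (prof i (mk 0) (mk y)).
Arguments gain : simpl never.

Lemma ext_lin t i sg tau : ext t (prof i sg tau) =
  sg x1 * ext t (prof i (mk 0) tau) + sg x2 * ext t (prof i (mk 1) tau).
Proof. destruct i; unfold ext, prof, mk; simpl; ring. Qed.

Lemma Uobs_lin p b s th i sg : U_obs p b s th i sg =
  sg x1 * U_obs p b s th i (mk 0) + sg x2 * U_obs p b s th i (mk 1).
Proof. unfold U_obs, sum2. rewrite 2!(ext_lin (tc th i) i sg). ring. Qed.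

Lemma Esum_comb d f g h a b : (forall t, f t = a * g t + b * h t) ->
  Esum d f = a * Esum d g + b * Esum d h.
Proof. intro H; induction d as [|[t w] d IH]; simpl; [ring|]. rewrite IH, H; ring. Qed.

Lemma Esum_sub d f g : Esum d f - Esum d g = Esum d (fun t => f t - g t).
Proof. induction d as [|[t w] d IH]; simpl; [ring|]. rewrite <- IH; ring. Qed.

Lemma Unobs_lin p mu b s i ti sg : U_nobs p mu b s i ti sg =
  sg x1 * U_nobs p mu b s i ti (mk 0) + sg x2 * U_nobs p mu b s i ti (mk 1).
Proof. unfold U_nobs. apply Esum_comb. intro; apply Uobs_lin. Qed.

Lemma BR_lem (F : mixed -> R) q :
  (forall sg, F sg = sg x1 * F (mk 0) + sg x2 * F (mk 1)) -> 0 <= q <= 1 ->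
  okBR q (F (mk 1) - F (mk 0)) -> forall sg, in_simplex sg -> F sg <= F (mk q).
Proof.
  intros HF Hq [H1 H2] sg [S1 [S2 S3]]. rewrite (HF sg), (HF (mk q)). change (mk q x1) with (1-q); change (mk q x2) with q.
  set (g := F (mk 1) - F (mk 0)) in *.
  replace (F (mk 1)) with (F (mk 0) + g) by (unfold g; ring).
  destruct (Rlt_le_dec 0 g).
  - assert (1 - q <= 0). { destruct (Rle_lt_dec (1-q) 0); auto. nra. } nra.
  - nra.
Qed.

Lemma simplex_mk q : 0 <= q <= 1 -> in_simplex (mk q).
Proof. intros; unfold in_simplex, mk; lra. Qed.

Lemma BR_obs p b s th i q : b th i = mk q -> 0 <= q <= 1 ->
  okBR q (U_obs p b s th i (mk 1) - U_obs p b s th i (mk 0)) ->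
  in_simplex (b th i) /\ (forall sg, in_simplex sg -> U_obs p b s th i sg <= U_obs p b s th i (b th i)).
Proof. intros E Hq H. rewrite E. split. now apply simplex_mk.
  apply BR_lem; auto. intro; apply Uobs_lin. Qed.

Lemma BR_nobs p mu b s i ti q : s i ti = mk q -> 0 <= q <= 1 ->
  okBR q (U_nobs p mu b s i ti (mk 1) - U_nobs p mu b s i ti (mk 0)) ->
  in_simplex (s i ti) /\ (forall sg, in_simplex sg -> U_nobs p mu b s i ti sg <= U_nobs p mu b s i ti (s i ti)).
Proof. intros E Hq H. rewrite E. split. now apply simplex_mk.
  apply BR_lem; auto. intro; apply Unobs_lin. Qed.

Lemma gain_aff i t y : gain i t y = gain i t 0 + y * (gain i t 1 - gain i t 0).
Proof. destruct i; unfold gain, ext, prof, mk; simpl; ring. Qed.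

Lemma gain_D i y : gain i (Dinc i) y = -1.
Proof. destruct i; unfold gain, ext, prof, mk, Dinc, D1, D2; simpl; ring. Qed.

Lemma Uobs_gain p b s th i yo yn : b th (other i) = mk yo ->
  s (other i) (tc th (other i)) = mk yn ->
  U_obs p b s th i (mk 1) - U_obs p b s th i (mk 0) =
  p * gain i (tc th i) yo + (1 - p) * gain i (tc th i) yn.
Proof. intros E1 E2. unfold U_obs, sum2, ow. rewrite E1, E2. unfold gain. ring. Qed.

Lemma Unobs_gain p mu b s i ti :
  U_nobs p mu b s i ti (mk 1) - U_nobs p mu b s i ti (mk 0) =
  Esum (mu (other i)) (fun tj => U_obs p b s (tpair i ti tj) i (mk 1) - U_obs p b s (tpair i ti tj) i (mk 0)).
Proof. unfold U_nobs. apply Esum_sub. Qed.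

Definition rr (x : R) : R := if Rlt_dec 0 x then 1 else 0.
Lemma rr_ok x : okBR (rr x) x.
Proof. unfold rr, okBR; destruct (Rlt_dec 0 x); lra. Qed.
Lemma rr_rng x : 0 <= rr x <= 1.
Proof. unfold rr; destruct (Rlt_dec 0 x); lra. Qed.

Lemma solve22 al be ga de : exists a b, 0 <= a <= 1 /\ 0 <= b <= 1 /\
  okBR a (al + be * b) /\ okBR b (ga + de * a).
Proof.
  unfold okBR.
  destruct (Rle_lt_dec 0 ga) as [g0|g0]; destruct (Rle_lt_dec 0 (ga+de)) as [g1|g1].
  - exists (rr (al + be * 1)), 1. pose proof (rr_ok (al+be*1)). pose proof (rr_rng (al+be*1)).
    unfold okBR in *. repeat split; try lra; nra.
  -
    destruct (Rle_lt_dec (al+be) 0).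
    + exists 0, 1. repeat split; lra.
    + destruct (Rle_lt_dec 0 al).
      * exists 1, 0. repeat split; lra.
      * assert (de <> 0) by lra. assert (be <> 0) by lra.
        exists (- ga / de), (- al / be).
        assert (Ha : ga + de * (- ga / de) = 0) by (field; lra).
        assert (Hb : al + be * (- al / be) = 0) by (field; lra).
        rewrite Ha, Hb. set (a := - ga / de) in *. set (b := - al / be) in *.
        repeat split; try lra; nra.
  -
    destruct (Rle_lt_dec al 0).
    + exists 0, 0. repeat split; lra.
    + destruct (Rle_lt_dec 0 (al+be)).
      * exists 1, 1. repeat split; lra.
      * assert (de <> 0) by lra. assert (be <> 0) by lra.
        exists (- ga / de), (- al / be).
        assert (Ha : ga + de * (- ga / de) = 0) by (field; lra).
        assert (Hb : al + be * (- al / be) = 0) by (field; lra).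
        rewrite Ha, Hb. set (a := - ga / de) in *. set (b := - al / be) in *.
        repeat split; try lra; nra.
  - exists (rr (al + be * 0)), 0. pose proof (rr_ok (al+be*0)). pose proof (rr_rng (al+be*0)).
    unfold okBR in *. repeat split; try lra; nra.
Qed.

Definition teq (t t' : Theta) : bool := if excluded_middle_informative (t = t') then true else false.
Lemma teq_refl t : teq t t = true.
Proof. unfold teq; destruct (excluded_middle_informative (t = t)); congruence. Qed.
Lemma teq_neq t t' : t <> t' -> teq t t' = false.
Proof. unfold teq; destruct (excluded_middle_informative (t = t')); congruence. Qed.
Arguments teq : simpl never.
Arguments rr : simpl never.

Definition Ag (tt : player -> Theta) (i : player) : R := gain i (tt i) 0.
Definition Sg (tt : player -> Theta) (i : player) : R := gain i (tt i) 1 - gain i (tt i) 0.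
Definition ufn (tt : player -> Theta) (i : player) (a : R) : R :=
  if Req_EM_T (Ag tt i) 0 then a else rr (Ag tt i).
Arguments ufn : simpl never.
Arguments Ag : simpl never.

Definition bB (tt : player -> Theta) (a b : R) : bstrat := fun th k =>
  if teq (fst th) D1 then
     match k with P1 => mk 0 | P2 => if teq (snd th) D2 then mk 0 else mk (rr (Ag tt P2)) end
  else if teq (snd th) D2 then
     match k with P1 => mk (rr (Ag tt P1)) | P2 => mk 0 end
  else match k with P1 => mk a | P2 => mk b end.
Definition sS (tt : player -> Theta) (a b : R) : sstrat := fun k t =>
  match k with
  | P1 => if teq t D1 then mk 0 else mk (ufn tt P1 a)
  | P2 => if teq t D2 then mk 0 else mk (ufn tt P2 b) end.

Definition h1 p tt b := gain P1 (tt P1) (p * b + (1 - p) * ufn tt P2 b).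
Definition h2 p tt a := gain P2 (tt P2) (p * a + (1 - p) * ufn tt P1 a).

Lemma In_post J tt eps i t : In t (supp (post mu0 J tt eps i)) ->
  t = Dinc i \/ (J i = true /\ t = tt i).
Proof. unfold post, mu0, entrant, supp; destruct (J i); simpl; intuition. Qed.

Lemma okBR_scale q g c : 0 <= c -> 0 <= q <= 1 -> okBR q g -> okBR q (c * g).
Proof. unfold okBR; intros; split; nra. Qed.

Lemma rr_pert A d : A <> 0 -> Rabs d < Rabs A -> okBR (rr A) (A + d).
Proof. intros HA Hd. unfold rr, okBR. destruct (Rlt_dec 0 A).
  - rewrite (Rabs_right A) in Hd by lra. pose proof (Rle_abs (-d)). rewrite Rabs_Ropp in *. lra.
  - rewrite (Rabs_left A) in Hd by lra. pose proof (Rle_abs d). lra. Qed.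

Lemma gain_mix p i t y z : p * gain i t y + (1 - p) * gain i t z = gain i t (p * y + (1 - p) * z).
Proof. rewrite (gain_aff i t y), (gain_aff i t z), (gain_aff i t (p*y+(1-p)*z)). ring. Qed.

Lemma gain_D1 y : gain P1 D1 y = -1.
Proof. exact (gain_D P1 y). Qed.
Lemma gain_D2 y : gain P2 D2 y = -1.
Proof. exact (gain_D P2 y). Qed.

Lemma ufn_rng tt i a : 0 <= a <= 1 -> 0 <= ufn tt i a <= 1.
Proof. intros; unfold ufn; destruct (Req_EM_T (Ag tt i) 0); auto using rr_rng. Qed.

Lemma nobs_ok tt i e Y a : 0 < e -> 0 <= Y <= 1 -> 0 <= a <= 1 ->
  (Ag tt i <> 0 -> e * (Rabs (Sg tt i) + 1) < Rabs (Ag tt i)) ->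
  okBR a (gain i (tt i) Y) ->
  okBR (ufn tt i a) (e * gain i (tt i) Y + (1 - e) * Ag tt i).
Proof.
  intros He HY Ha HE Hok. unfold ufn. rewrite (gain_aff i (tt i) Y) in *.
  unfold Sg, Ag in *. set (g0 := gain i (tt i) 0) in *. set (g1 := gain i (tt i) 1) in *.
  destruct (Req_EM_T g0 0) as [E|E].
  - rewrite E in *. unfold okBR in *. destruct Hok. split; nra.
  - replace (e * (g0 + Y * (g1 - g0)) + (1 - e) * g0) with (g0 + e * Y * (g1 - g0)) by ring.
    apply rr_pert; auto. specialize (HE E).
    rewrite !Rabs_mult, (Rabs_right e), (Rabs_right Y) by lra.
    pose proof (Rabs_pos (g1 - g0)). assert (0 <= e * (1 - Y) * Rabs (g1-g0)) by (apply Rmult_le_pos; [apply Rmult_le_pos|]; lra). nra.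
Qed.

Ltac tq := repeat first [rewrite teq_refl |
   match goal with H : ?m P1 <> D1 |- _ => rewrite (teq_neq _ _ H) end |
   match goal with H : ?m P2 <> D2 |- _ => rewrite (teq_neq _ _ H) end].
Ltac ev := unfold bB, sS; cbn [fst snd tc other tpair]; tq; reflexivity.

Lemma ufn_ok0 tt i a : okBR (ufn tt i a) (Ag tt i).
Proof. unfold ufn; destruct (Req_EM_T (Ag tt i) 0) as [E|E]; [rewrite E; unfold okBR; lra | apply rr_ok]. Qed.

Lemma exist_eq p J tt eps a b :
 0 < p < 1 ->
 (forall j, J j = true -> tt j <> Dinc j) ->
 (forall j, J j = true -> 0 < eps j < 1) ->
 (forall j k, J j = true -> Ag tt k <> 0 -> eps j * (Rabs (Sg tt k) + 1) < Rabs (Ag tt k)) ->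
 0 <= a <= 1 -> 0 <= b <= 1 ->
 okBR a (h1 p tt b) -> okBR b (h2 p tt a) ->
 is_eq p (post mu0 J tt eps) (bB tt a b) (sS tt a b).
Proof.
  intros Hp Hn He HE Ha Hb Oa Ob.
  assert (R0 : 0 <= 0 <= 1) by lra.
  split.
  - intros t1 t2 H1 H2 i.
    apply In_post in H1. apply In_post in H2.
    destruct H1 as [-> | [J1 ->]]; destruct H2 as [-> | [J2 ->]];
    try (pose proof (Hn _ J1) as N1; simpl in N1);
    try (pose proof (Hn _ J2) as N2; simpl in N2);
    destruct i; simpl Dinc; (eapply BR_obs; [ev | | ]).
    all: try first [exact R0 | exact Ha | exact Hb | apply rr_rng].
    all: erewrite Uobs_gain; [ | ev | ev ]; cbn [tc fst snd].
    all: rewrite ?gain_D1, ?gain_D2.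
    all: try (unfold okBR; lra).
    all: try (rewrite gain_mix; assumption).
    all: unfold Ag; match goal with |- okBR _ (?pp * ?g + _ * _) => replace (pp * g + (1 - pp) * g) with g by ring end; apply rr_ok.
  - intros i ti Hin. apply In_post in Hin.
    destruct i; destruct Hin as [-> | [J1 ->]];
    try (pose proof (Hn _ J1) as N1; simpl in N1); simpl Dinc;
    (eapply BR_nobs; [ev | | ]);
    try first [exact R0 | apply ufn_rng; assumption];
    rewrite Unobs_gain; unfold post, mu0, entrant; cbn [other Dinc];
    [destruct (J P2) eqn:J2 | destruct (J P2) eqn:J2 | destruct (J P1) eqn:J2 | destruct (J P1) eqn:J2];
    try (pose proof (Hn _ J2) as N2; simpl in N2);
    cbn [Esum map fst snd tpair];
    repeat (erewrite Uobs_gain; [ | ev | ev]); cbn [tc fst snd];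
    rewrite ?gain_D1, ?gain_D2.
    all: try (pose proof (He _ J2); unfold okBR; nra).
    all: try (unfold okBR; nra).
    + rewrite gain_mix.
      match goal with |- okBR _ ?E => replace E with (eps P2 * gain P1 (tt P1) (p*b+(1-p)*ufn tt P2 b) + (1 - eps P2) * Ag tt P1) by (unfold Ag; ring) end.
      pose proof (He _ J2). pose proof (ufn_rng tt P2 b Hb).
      apply nobs_ok; try lra. nra. intro; apply (HE P2); auto. exact Oa.
    + match goal with |- okBR _ ?E => replace E with (Ag tt P1) by (unfold Ag; ring) end. apply ufn_ok0.
    + rewrite gain_mix.
      match goal with |- okBR _ ?E => replace E with (eps P1 * gain P2 (tt P2) (p*a+(1-p)*ufn tt P1 a) + (1 - eps P1) * Ag tt P2) by (unfold Ag; ring) end.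
      pose proof (He _ J2). pose proof (ufn_rng tt P1 a Ha).
      apply nobs_ok; try lra. nra. intro; apply (HE P1); auto. exact Ob.
    + match goal with |- okBR _ ?E => replace E with (Ag tt P2) by (unfold Ag; ring) end. apply ufn_ok0.
Qed.

Definition G1f (x y : R) := 5 * ((1 - x) * (1 - y) + x * y).
Definition G2f (x y : R) := 5 * ((1 - x) * (1 - y)) + 10 * (x * y).

Lemma final_logic p e1 e2 a bb u v c1 c2 :
  0 < p < 1 -> 0 < e1 -> e1 < (1 - p) / 5 -> 0 < e2 -> e2 < (1 - p) / 5 ->
  0 <= a <= 1 -> 0 <= bb <= 1 -> 0 <= u <= 1 -> 0 <= v <= 1 -> 0 <= c1 <= 1 -> 0 <= c2 <= 1 ->
  let d1 := 5 * (p * c1 + (1 - p) * u) in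
  let d2 := 5 * (p * c2 + (1 - p) * v) in
  let Z1 := p * p * G1f a bb + p * (1 - p) * G1f a v + (1 - p) * p * G1f u bb + (1 - p) * (1 - p) * G1f u v in
  let Z2 := p * p * G2f a bb + p * (1 - p) * G2f a v + (1 - p) * p * G2f u bb + (1 - p) * (1 - p) * G2f u v in
  let Del1 := (1 - e2) * d1 + e2 * (5 - d2 - Z1) in
  let Del2 := (1 - e1) * d2 + e1 * (5 - d1 - Z2) in
  Del1 > 0 \/ Del2 > 0 \/ (Del1 = 0 /\ Del2 = 0).
Proof.
  intros Hp He1 He1' He2 He2' Ha Hb Hu Hv Hc1 Hc2 d1 d2 Z1 Z2 Del1 Del2.
  assert (m1 : forall x y, 0 <= x <= 1 -> 0 <= y <= 1 -> 0 <= x + y - 2 * x * y) by (intros; nra).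
  set (Dp := 5 - Z1).
  assert (EZ1 : Dp = 5 * (p * p * (a + bb - 2 * a * bb) + p * (1 - p) * (a + v - 2 * a * v)
     + (1 - p) * p * (u + bb - 2 * u * bb) + (1 - p) * (1 - p) * (u + v - 2 * u * v)))
    by (unfold Dp, Z1, G1f; ring).
  assert (Hpp : 0 <= p * p) by nra. assert (Hpq : 0 <= p * (1 - p)) by nra.
  assert (Hqq : 0 <= (1 - p) * (1 - p)) by nra.
  assert (T1 := m1 a bb Ha Hb). assert (T2 := m1 a v Ha Hv). assert (T3 := m1 u bb Hu Hb). assert (T4 := m1 u v Hu Hv).
  assert (W1 : 0 <= p * p * (a + bb - 2 * a * bb)) by nra.
  assert (W2 : 0 <= p * (1 - p) * (a + v - 2 * a * v)) by nra.
  assert (W3 : 0 <= (1 - p) * p * (u + bb - 2 * u * bb)) by nra.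
  assert (W4 : 0 <= (1 - p) * (1 - p) * (u + v - 2 * u * v)) by nra.
  assert (Dp0 : 0 <= Dp) by lra.
  assert (ED2 : Z2 - 5 = 5 * (p * p * a * bb + p * (1 - p) * a * v + (1 - p) * p * u * bb + (1 - p) * (1 - p) * u * v) - Dp)
    by (unfold Dp, Z1, Z2, G1f, G2f; ring).
  assert (B1 : a * bb <= (a + v - 2 * a * v) + v) by (assert (a*bb <= a) by nra; assert (0 <= v*(1-a)) by nra; lra).
  assert (B1' : (1 - p) * (p * p * a * bb) <= p * (p * (1 - p) * (a + v - 2 * a * v)) + (1 - p) * p * p * v).
  { assert (0 <= (1-p) * (p*p)) by nra.
    replace ((1 - p) * (p * p * a * bb)) with ((1-p)*(p*p) * (a * bb)) by ring.
    apply Rle_trans with ((1-p)*(p*p) * ((a + v - 2 * a * v) + v)). apply Rmult_le_compat_l; lra. apply Req_le; ring. }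
  assert (B2 : p * (1 - p) * a * v <= p * (1 - p) * v) by (assert (0 <= p*(1-p)*v*(1-a)) by (repeat apply Rmult_le_pos; lra); nra).
  assert (B3 : (1 - p) * p * u * bb <= (1 - p) * p * u) by (assert (0 <= (1-p)*p*u*(1-bb)) by (repeat apply Rmult_le_pos; lra); nra).
  assert (B4 : (1 - p) * (1 - p) * u * v <= (1 - p) * (1 - p) * u) by (assert (0 <= (1-p)*(1-p)*u*(1-v)) by (repeat apply Rmult_le_pos; lra); nra).
  assert (Key : (1 - p) * (Z2 - 5) <= Dp + d1 + d2).
  { rewrite ED2.
    assert (S : (1 - p) * (5 * (p * p * a * bb + p * (1 - p) * a * v + (1 - p) * p * u * bb + (1 - p) * (1 - p) * u * v))
              <= p * Dp + 5 * (1 - p) * (p * v + (1 - p) * u)).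
    { assert (p * (p * (1 - p) * (a + v - 2 * a * v)) * 5 <= p * Dp).
      { rewrite EZ1. assert (0 <= p * (p * p * (a + bb - 2 * a * bb) + (1 - p) * p * (u + bb - 2 * u * bb) + (1 - p) * (1 - p) * (u + v - 2 * u * v))) by (apply Rmult_le_pos; lra). lra. }
      assert (0 <= 1 - p) by lra.
      assert ((1-p) * (p * (1 - p) * a * v) <= (1-p) * (p * (1 - p) * v)) by (apply Rmult_le_compat_l; lra).
      assert ((1-p) * ((1 - p) * p * u * bb) <= (1-p) * ((1 - p) * p * u)) by (apply Rmult_le_compat_l; lra).
      assert ((1-p) * ((1 - p) * (1 - p) * u * v) <= (1-p) * ((1 - p) * (1 - p) * u)) by (apply Rmult_le_compat_l; lra).
      lra. }
    assert (5 * (1 - p) * (p * v + (1 - p) * u) <= d1 + d2).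
    { unfold d1, d2. assert (0 <= p * c1) by nra. assert (0 <= p * c2) by nra.
      assert ((1-p) * p * v <= (1 - p) * v) by nra. assert ((1-p)*(1-p)*u <= (1-p)*u) by nra. lra. }
    assert (0 <= p * Dp) by nra. assert (0 <= (1-p) * Dp) by nra. lra. }
  assert (d1p : 0 <= d1) by (unfold d1; assert (0 <= p*c1) by (apply Rmult_le_pos; lra); assert (0 <= (1-p)*u) by (apply Rmult_le_pos; lra); lra).
  assert (d2p : 0 <= d2) by (unfold d2; assert (0 <= p*c2) by (apply Rmult_le_pos; lra); assert (0 <= (1-p)*v) by (apply Rmult_le_pos; lra); lra).
  assert (EDel1 : Del1 = (1 - e2) * d1 + e2 * (Dp - d2)) by (unfold Del1, Dp; ring).
  destruct (Rlt_le_dec 0 Del1) as [P1|P1]; [left; lra|].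
  assert (Q1 : (1 - e2) * d1 + e2 * Dp <= e2 * d2) by lra.
  assert (X1 : 0 <= e2 * Dp) by (apply Rmult_le_pos; lra).
  assert (X2 : 0 <= (1 - 2 * e2) * d2) by (apply Rmult_le_pos; lra).
  assert (X3 : 0 <= (1 - e2) * d1) by (apply Rmult_le_pos; lra).
  assert (d1le : d1 <= d2).
  { destruct (Rle_lt_dec d1 d2); auto. exfalso. assert (0 < (1-e2)*(d1-d2)) by (apply Rmult_lt_0_compat; lra). lra. }
  assert (Dle : Dp <= d2).
  { destruct (Rle_lt_dec Dp d2); auto. exfalso. assert (0 < e2*(Dp-d2)) by (apply Rmult_lt_0_compat; lra). lra. }
  assert (EDel2 : (1 - p) * Del2 = (1 - p) * (1 - e1) * d2 - (1 - p) * e1 * d1 - e1 * ((1 - p) * (Z2 - 5)))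
    by (unfold Del2; ring).
  assert (L2 : (1 - p) * Del2 >= (1 - p) * (1 - e1) * d2 - 4 * e1 * d2).
  { rewrite EDel2. assert (e1 * ((1 - p) * (Z2 - 5)) <= e1 * (Dp + d1 + d2)) by (apply Rmult_le_compat_l; lra).
    assert (0 <= p*e1*d1) by (apply Rmult_le_pos; [apply Rmult_le_pos|]; lra).
    assert (e1*(Dp + d1 + d2) <= e1*(3*d2)) by (apply Rmult_le_compat_l; lra).
    assert (e1*d1 <= e1*d2) by (apply Rmult_le_compat_l; lra). lra. }
  destruct (Rlt_le_dec 0 d2) as [D2p|D2p].
  - right; left. assert (0 <= p*e1) by (apply Rmult_le_pos; lra).
    assert (0 < (1 - p) * (1 - e1) - 4 * e1) by lra.
    assert (0 < d2 * ((1 - p) * (1 - e1) - 4 * e1)) by (apply Rmult_lt_0_compat; lra).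
    apply (Rmult_lt_reg_l (1-p)); [lra| rewrite Rmult_0_r; lra].
  - assert (Zd2 : d2 = 0) by lra. assert (d1 = 0) by lra. assert (Dp = 0) by lra.
    assert (0 <= Del2).
    { apply (Rmult_le_reg_l (1-p)); [lra| rewrite Rmult_0_r]. rewrite Zd2 in L2. lra. }
    destruct (Rlt_le_dec 0 Del2); [right; left; lra | right; right; split; lra].
Qed.

Lemma Uobs_D p b s th i sg : tc th i = Dinc i -> in_simplex (b th (other i)) ->
  in_simplex (s (other i) (tc th (other i))) -> U_obs p b s th i sg = sg x1.
Proof.
  intros E [_ [_ S1]] [_ [_ S2]]. unfold U_obs, sum2, ow. rewrite E.
  destruct i; cbn [other Dinc] in *;
  [ set (A := b th P2) in *; set (B := s P2 (tc th P2)) in * | set (A := b th P1) in *; set (B := s P1 (tc th P1)) in *];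
  unfold ext, prof, D1, D2; cbn;
  replace (A x1) with (1 - A x2) by lra; replace (B x1) with (1 - B x2) by lra; ring.
Qed.

Lemma pure_obs p mu b s t1 t2 i : is_eq p mu b s -> In t1 (supp (mu P1)) -> In t2 (supp (mu P2)) ->
  tc (t1, t2) i = Dinc i -> b (t1, t2) i x1 = 1 /\ b (t1, t2) i x2 = 0.
Proof.
  intros [Ho Hn] H1 H2 E.
  destruct (Ho t1 t2 H1 H2 i) as [Si Bi]. destruct (Ho t1 t2 H1 H2 (other i)) as [So _].
  assert (Hin : In (tc (t1,t2) (other i)) (supp (mu (other i)))) by (destruct i; simpl; assumption).
  destruct (Hn _ _ Hin) as [Ss _].
  pose proof (Bi (mk 0) (simplex_mk 0 ltac:(lra))) as B.
  rewrite !(Uobs_D p b s (t1,t2) i) in B by assumption.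
  unfold mk in B. destruct Si as [? [? ?]]. lra.
Qed.

Lemma Esum_ext_in d f g : (forall t, In t (supp d) -> f t = g t) -> Esum d f = Esum d g.
Proof. induction d as [|[t w] d IH]; simpl; intros H; auto.
  rewrite H by auto. rewrite IH by auto. reflexivity. Qed.

Lemma Esum_const d c : Esum d (fun _ => c) = c * Esum d (fun _ => 1).
Proof. induction d as [|[t w] d IH]; simpl; [ring|]. rewrite IH; ring. Qed.

Lemma pure_nobs p mu b s i : is_eq p mu b s -> In (Dinc i) (supp (mu i)) ->
  Esum (mu (other i)) (fun _ => 1) = 1 -> s i (Dinc i) x1 = 1 /\ s i (Dinc i) x2 = 0.
Proof.
  intros [Ho Hn] H W. destruct (Hn i _ H) as [Si Bi].
  assert (U : forall sg, U_nobs p mu b s i (Dinc i) sg = sg x1).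
  { intro sg. unfold U_nobs. rewrite (Esum_ext_in _ _ (fun _ => sg x1)). rewrite Esum_const, W; ring.
    intros tj Hj. apply Uobs_D.
    - destruct i; reflexivity.
    - destruct i; simpl in *; [apply (Ho _ _ H Hj) | apply (Ho _ _ Hj H)].
    - apply (Hn (other i)). destruct i; simpl in *; assumption. }
  pose proof (Bi (mk 0) (simplex_mk 0 ltac:(lra))) as B. rewrite !U in B.
  unfold mk in B. destruct Si as [? [? ?]]. lra.
Qed.

Notation FF p J tt eps b s i t := (fitness G p (post mu0 J tt eps) b s i t).

Lemma simp_x1 (m : mixed) : in_simplex m -> m x1 = 1 - m x2.
Proof. intros [? [? ?]]; lra. Qed.
Lemma simp_rng (m : mixed) : in_simplex m -> 0 <= m x2 <= 1.
Proof. intros [? [? ?]]; lra. Qed.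

Lemma fitTT p J tt eps b' s' : 0 < p < 1 -> J P1 = true -> J P2 = true ->
  0 < eps P1 -> eps P1 < (1 - p) / 5 -> 0 < eps P2 -> eps P2 < (1 - p) / 5 ->
  is_eq p (post mu0 J tt eps) b' s' ->
  FF p J tt eps b' s' P1 D1 > FF p J tt eps b' s' P1 (tt P1) \/
  FF p J tt eps b' s' P2 D2 > FF p J tt eps b' s' P2 (tt P2) \/
  (FF p J tt eps b' s' P1 D1 = FF p J tt eps b' s' P1 (tt P1) /\
   FF p J tt eps b' s' P2 D2 = FF p J tt eps b' s' P2 (tt P2)).
Proof.
  intros Hp J1 J2 e1a e1b e2a e2b Heq.
  assert (ID1 : In D1 (supp (post mu0 J tt eps P1))) by (unfold post, mu0, entrant; rewrite J1; simpl; auto).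
  assert (IM1 : In (tt P1) (supp (post mu0 J tt eps P1))) by (unfold post, mu0, entrant; rewrite J1; simpl; auto).
  assert (ID2 : In D2 (supp (post mu0 J tt eps P2))) by (unfold post, mu0, entrant; rewrite J2; simpl; auto).
  assert (IM2 : In (tt P2) (supp (post mu0 J tt eps P2))) by (unfold post, mu0, entrant; rewrite J2; simpl; auto).
  assert (W1 : Esum (post mu0 J tt eps P1) (fun _ => 1) = 1) by (unfold post, mu0, entrant; rewrite J1; simpl; ring).
  assert (W2 : Esum (post mu0 J tt eps P2) (fun _ => 1) = 1) by (unfold post, mu0, entrant; rewrite J2; simpl; ring).
  destruct (pure_obs _ _ _ _ D1 D2 P1 Heq ID1 ID2 eq_refl) as [P11 P12].
  destruct (pure_obs _ _ _ _ D1 D2 P2 Heq ID1 ID2 eq_refl) as [P13 P14].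
  destruct (pure_obs _ _ _ _ D1 (tt P2) P1 Heq ID1 IM2 eq_refl) as [P15 P16].
  destruct (pure_obs _ _ _ _ (tt P1) D2 P2 Heq IM1 ID2 eq_refl) as [P17 P18].
  destruct (pure_nobs _ _ _ _ P1 Heq ID1 W2) as [P19 P20].
  destruct (pure_nobs _ _ _ _ P2 Heq ID2 W1) as [P21 P22].
  cbn [Dinc] in *.
  destruct Heq as [Ho Hn].
  pose proof (proj1 (Ho _ _ IM1 IM2 P1)) as Sa.
  pose proof (proj1 (Ho _ _ IM1 IM2 P2)) as Sb.
  pose proof (proj1 (Ho _ _ IM1 ID2 P1)) as Sc1.
  pose proof (proj1 (Ho _ _ ID1 IM2 P2)) as Sc2.
  pose proof (proj1 (Hn _ _ IM1)) as Su.
  pose proof (proj1 (Hn _ _ IM2)) as Sv.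
  pose proof (simp_rng _ Sa). pose proof (simp_rng _ Sb). pose proof (simp_rng _ Sc1).
  pose proof (simp_rng _ Sc2). pose proof (simp_rng _ Su). pose proof (simp_rng _ Sv).
  apply simp_x1 in Sa, Sb, Sc1, Sc2, Su, Sv.
  pose proof (final_logic p (eps P1) (eps P2) _ _ _ _ _ _ Hp e1a e1b e2a e2b H H0 H3 H4 H1 H2) as FL.
  cbv zeta in FL.
  unfold fitness, post, mu0, entrant in *; cbn [other Dinc] in *; rewrite J1, J2 in *;
  cbn [Esum map fst snd tpair];
  unfold sum4, ow, played, obsf, ext; cbn beta iota delta [tc fst snd G];
  rewrite ?P11, ?P12, ?P13, ?P14, ?P15, ?P16, ?P17, ?P18, ?P19, ?P20, ?P21, ?P22;
  rewrite ?Sa, ?Sb, ?Sc1, ?Sc2, ?Su, ?Sv.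
  unfold G1f, G2f in FL.
  destruct FL as [FL|[FL|[FL1 FL2]]]; [left|right;left|right;right;split]; lra.
Qed.

Lemma fitTF p J tt eps b' s' : 0 < p < 1 -> J P1 = true -> J P2 = false ->
  0 < eps P1 < 1 -> is_eq p (post mu0 J tt eps) b' s' ->
  FF p J tt eps b' s' P1 D1 > FF p J tt eps b' s' P1 (tt P1) \/
  FF p J tt eps b' s' P1 D1 = FF p J tt eps b' s' P1 (tt P1).
Proof.
  intros Hp J1 J2 e1 Heq.
  assert (ID1 : In D1 (supp (post mu0 J tt eps P1))) by (unfold post, mu0, entrant; rewrite J1; simpl; auto).
  assert (IM1 : In (tt P1) (supp (post mu0 J tt eps P1))) by (unfold post, mu0, entrant; rewrite J1; simpl; auto).
  assert (ID2 : In D2 (supp (post mu0 J tt eps P2))) by (unfold post, mu0, entrant; rewrite J2; simpl; auto).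
  assert (W1 : Esum (post mu0 J tt eps P1) (fun _ => 1) = 1) by (unfold post, mu0, entrant; rewrite J1; simpl; ring).
  assert (W2 : Esum (post mu0 J tt eps P2) (fun _ => 1) = 1) by (unfold post, mu0, entrant; rewrite J2; simpl; ring).
  destruct (pure_obs _ _ _ _ D1 D2 P1 Heq ID1 ID2 eq_refl) as [P11 P12].
  destruct (pure_obs _ _ _ _ D1 D2 P2 Heq ID1 ID2 eq_refl) as [P13 P14].
  destruct (pure_obs _ _ _ _ (tt P1) D2 P2 Heq IM1 ID2 eq_refl) as [P17 P18].
  destruct (pure_nobs _ _ _ _ P1 Heq ID1 W2) as [P19 P20].
  destruct (pure_nobs _ _ _ _ P2 Heq ID2 W1) as [P21 P22].
  cbn [Dinc] in *.
  destruct Heq as [Ho Hn].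
  pose proof (proj1 (Ho _ _ IM1 ID2 P1)) as Sc1.
  pose proof (proj1 (Hn _ _ IM1)) as Su.
  pose proof (simp_rng _ Sc1). pose proof (simp_rng _ Su).
  apply simp_x1 in Sc1, Su.
  assert (0 <= p * b' (tt P1, D2) P1 x2) by (apply Rmult_le_pos; lra).
  assert (0 <= (1-p) * s' P1 (tt P1) x2) by (apply Rmult_le_pos; lra).
  unfold fitness, post, mu0, entrant in *; cbn [other Dinc] in *; rewrite J1, J2 in *;
  cbn [Esum map fst snd tpair];
  unfold sum4, ow, played, obsf, ext; cbn beta iota delta [tc fst snd G];
  rewrite ?P11, ?P12, ?P13, ?P14, ?P17, ?P18, ?P19, ?P20, ?P21, ?P22;
  rewrite ?Sc1, ?Su.
  match goal with |- ?A > ?B \/ _ => destruct (Rlt_le_dec B A); [left; lra | right; lra] end.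
Qed.

Lemma fitFT p J tt eps b' s' : 0 < p < 1 -> J P1 = false -> J P2 = true ->
  0 < eps P2 < 1 -> is_eq p (post mu0 J tt eps) b' s' ->
  FF p J tt eps b' s' P2 D2 > FF p J tt eps b' s' P2 (tt P2) \/
  FF p J tt eps b' s' P2 D2 = FF p J tt eps b' s' P2 (tt P2).
Proof.
  intros Hp J1 J2 e1 Heq.
  assert (ID1 : In D1 (supp (post mu0 J tt eps P1))) by (unfold post, mu0, entrant; rewrite J1; simpl; auto).
  assert (IM2 : In (tt P2) (supp (post mu0 J tt eps P2))) by (unfold post, mu0, entrant; rewrite J2; simpl; auto).
  assert (ID2 : In D2 (supp (post mu0 J tt eps P2))) by (unfold post, mu0, entrant; rewrite J2; simpl; auto).
  assert (W1 : Esum (post mu0 J tt eps P1) (fun _ => 1) = 1) by (unfold post, mu0, entrant; rewrite J1; simpl; ring).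
  assert (W2 : Esum (post mu0 J tt eps P2) (fun _ => 1) = 1) by (unfold post, mu0, entrant; rewrite J2; simpl; ring).
  destruct (pure_obs _ _ _ _ D1 D2 P1 Heq ID1 ID2 eq_refl) as [P11 P12].
  destruct (pure_obs _ _ _ _ D1 D2 P2 Heq ID1 ID2 eq_refl) as [P13 P14].
  destruct (pure_obs _ _ _ _ D1 (tt P2) P1 Heq ID1 IM2 eq_refl) as [P15 P16].
  destruct (pure_nobs _ _ _ _ P1 Heq ID1 W2) as [P19 P20].
  destruct (pure_nobs _ _ _ _ P2 Heq ID2 W1) as [P21 P22].
  cbn [Dinc] in *.
  destruct Heq as [Ho Hn].
  pose proof (proj1 (Ho _ _ ID1 IM2 P2)) as Sc2.
  pose proof (proj1 (Hn _ _ IM2)) as Sv.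
  pose proof (simp_rng _ Sc2). pose proof (simp_rng _ Sv).
  apply simp_x1 in Sc2, Sv.
  assert (0 <= p * b' (D1, tt P2) P2 x2) by (apply Rmult_le_pos; lra).
  assert (0 <= (1-p) * s' P2 (tt P2) x2) by (apply Rmult_le_pos; lra).
  unfold fitness, post, mu0, entrant in *; cbn [other Dinc] in *; rewrite J1, J2 in *;
  cbn [Esum map fst snd tpair];
  unfold sum4, ow, played, obsf, ext; cbn beta iota delta [tc fst snd G];
  rewrite ?P11, ?P12, ?P13, ?P14, ?P15, ?P16, ?P19, ?P20, ?P21, ?P22;
  rewrite ?Sc2, ?Sv.
  match goal with |- ?A > ?B \/ _ => destruct (Rlt_le_dec B A); [left; lra | right; lra] end.
Qed.

Lemma h1_aff p tt : exists al be, forall b, h1 p tt b = al + be * b.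
Proof. unfold h1, ufn. destruct (Req_EM_T (Ag tt P2) 0).
  - exists (gain P1 (tt P1) 0), ((gain P1 (tt P1) 1 - gain P1 (tt P1) 0) * (p + (1 - p))).
    intro b; rewrite (gain_aff P1 (tt P1) (p * b + (1 - p) * b)); ring.
  - exists (gain P1 (tt P1) 0 + (gain P1 (tt P1) 1 - gain P1 (tt P1) 0) * ((1 - p) * rr (Ag tt P2))),
      ((gain P1 (tt P1) 1 - gain P1 (tt P1) 0) * p).
    intro b; rewrite (gain_aff P1 (tt P1) (p * b + (1 - p) * rr (Ag tt P2))); ring.
Qed.

Lemma h2_aff p tt : exists al be, forall b, h2 p tt b = al + be * b.
Proof. unfold h2, ufn. destruct (Req_EM_T (Ag tt P1) 0).
  - exists (gain P2 (tt P2) 0), ((gain P2 (tt P2) 1 - gain P2 (tt P2) 0) * (p + (1 - p))).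
    intro b; rewrite (gain_aff P2 (tt P2) (p * b + (1 - p) * b)); ring.
  - exists (gain P2 (tt P2) 0 + (gain P2 (tt P2) 1 - gain P2 (tt P2) 0) * ((1 - p) * rr (Ag tt P1))),
      ((gain P2 (tt P2) 1 - gain P2 (tt P2) 0) * p).
    intro b; rewrite (gain_aff P2 (tt P2) (p * b + (1 - p) * rr (Ag tt P1))); ring.
Qed.

Definition eb (tt : player -> Theta) (k : player) : R :=
  if Req_EM_T (Ag tt k) 0 then 1 else Rabs (Ag tt k) / (Rabs (Sg tt k) + 1).

Lemma eb_pos tt k : 0 < eb tt k.
Proof. unfold eb; destruct (Req_EM_T (Ag tt k) 0); [lra|].
  pose proof (Rabs_pos (Sg tt k)). apply Rdiv_lt_0_compat; [|lra]. apply Rabs_pos_lt; auto. Qed.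

Lemma eb_prop tt k e : Ag tt k <> 0 -> e < eb tt k -> e * (Rabs (Sg tt k) + 1) < Rabs (Ag tt k).
Proof. unfold eb; destruct (Req_EM_T (Ag tt k) 0); [contradiction|]. intros _ H.
  pose proof (Rabs_pos (Sg tt k)).
  replace (Rabs (Ag tt k)) with (Rabs (Ag tt k) / (Rabs (Sg tt k) + 1) * (Rabs (Sg tt k) + 1)) by (field; lra).
  apply Rmult_lt_compat_r; lra. Qed.

Lemma close_ii p J tt eps b s :
  (J P1 = true -> FF p J tt eps b s P1 D1 = FF p J tt eps b s P1 (tt P1)) ->
  (J P2 = true -> FF p J tt eps b s P2 D2 = FF p J tt eps b s P2 (tt P2)) ->
  forall i t t', In t (supp (post mu0 J tt eps i)) -> In t' (supp (post mu0 J tt eps i)) ->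
  FF p J tt eps b s i t = FF p J tt eps b s i t'.
Proof.
  intros E1 E2 i t t' H H'. apply In_post in H. apply In_post in H'.
  destruct i; cbn [Dinc] in *; destruct H as [->|[Ji ->]]; destruct H' as [->|[Ji' ->]];
  first [reflexivity | apply E1; assumption | symmetry; apply E1; assumption
        | apply E2; assumption | symmetry; apply E2; assumption].
Qed.

Lemma mdist_self m : mdist m m = 0.
Proof. unfold mdist. rewrite !Rminus_diag_eq, Rabs_R0 by reflexivity. apply Rmax_left; lra. Qed.

Lemma eq0 p : 0 < p < 1 -> is_eq p mu0 b0 s0.
Proof.
  intros Hp. assert (R0 : 0 <= 0 <= 1) by lra. split.
  - intros t1 t2 H1 H2 i. cbn in H1, H2. destruct H1 as [<-|[]]; destruct H2 as [<-|[]].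
    destruct i; (eapply BR_obs; [reflexivity | exact R0 |]);
    (erewrite Uobs_gain; [ | reflexivity | reflexivity ]); cbn [tc fst snd];
    rewrite ?gain_D1, ?gain_D2; unfold okBR; lra.
  - intros i ti H. cbn in H. destruct H as [<-|[]].
    eapply BR_nobs; [reflexivity | exact R0 |]. rewrite Unobs_gain. unfold mu0.
    destruct i; cbn [Esum other Dinc tpair];
    (erewrite Uobs_gain; [ | reflexivity | reflexivity ]); cbn [tc fst snd];
    rewrite ?gain_D1, ?gain_D2; unfold okBR; lra.
Qed.

Theorem mainTheorem18 : forall p : R, 0 < p < 1 -> stable_pure G p x1 x1.
Proof.
  intros p Hp. exists mu0, b0, s0.
  split; [|split; [apply eq0; auto|split]].
  - unfold valid_pop, valid_dist, mu0, supp; simpl. repeat split; try (repeat constructor; simpl; tauto); try ring; repeat constructor; simpl; lra.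
  - split.
    + intros i t t' H H'. cbn in H, H'. destruct H as [<-|[]]; destruct H' as [<-|[]]; reflexivity.
    + intros J tt [j Hj] Hnot eta Heta.
      set (epsb := Rmin ((1 - p) / 5) (Rmin (eb tt P1) (eb tt P2))).
      assert (Eb1 : epsb <= (1 - p) / 5) by apply Rmin_l.
      assert (Eb2 : epsb <= eb tt P1) by (eapply Rle_trans; [apply Rmin_r | apply Rmin_l]).
      assert (Eb3 : epsb <= eb tt P2) by (eapply Rle_trans; [apply Rmin_r | apply Rmin_r]).
      assert (Ebp : 0 < epsb).
      { unfold epsb. pose proof (eb_pos tt P1). pose proof (eb_pos tt P2).
        apply Rmin_pos; [lra | apply Rmin_pos; lra]. }
      exists 0, epsb. split; [lra|]. split; [lra|].
      intros eps He Hlt.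
      assert (Hn : forall j, J j = true -> tt j <> Dinc j).
      { intros k Hk E. apply (Hnot k Hk). rewrite E. unfold mu0; simpl; auto. }
      assert (HE : forall j k, J j = true -> Ag tt k <> 0 -> eps j * (Rabs (Sg tt k) + 1) < Rabs (Ag tt k)).
      { intros j' k Hj' HA. apply eb_prop; auto. specialize (Hlt j' Hj').
        destruct k; lra. }
      split.
      * destruct (h1_aff p tt) as [al [be Hh1]]. destruct (h2_aff p tt) as [ga [de Hh2]].
        destruct (solve22 al be ga de) as [a [b [Ha [Hb [Oa Ob]]]]].
        exists (bB tt a b), (sS tt a b). split.
        -- apply exist_eq; auto. rewrite Hh1; exact Oa. rewrite Hh2; exact Ob.
        -- intros t1 t2 H1 H2 i. cbn in H1, H2. destruct H1 as [<-|[]]; destruct H2 as [<-|[]].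
           destruct i; unfold bB, sS, b0, s0; cbn [fst snd tc]; rewrite ?teq_refl; rewrite mdist_self; lra.
      * intros b' s' [Heq _].
        assert (Hep : forall k, J k = true -> 0 < eps k < (1 - p) / 5).
        { intros k Hk. pose proof (He k Hk). pose proof (Hlt k Hk). lra. }
        destruct (J P1) eqn:J1; destruct (J P2) eqn:J2.
        -- destruct (Hep P1 J1), (Hep P2 J2).
           destruct (fitTT p J tt eps b' s' Hp J1 J2 ltac:(lra) ltac:(lra) ltac:(lra) ltac:(lra) Heq)
             as [F|[F|[F1 F2]]].
           ++ left. exists P1. split; auto. intros tj Htj. cbn in Htj. destruct Htj as [<-|[]]. exact F.
           ++ left. exists P2. split; auto. intros tj Htj. cbn in Htj. destruct Htj as [<-|[]]. exact F.
           ++ right. apply close_ii; auto.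
        -- destruct (He P1 J1). destruct (fitTF p J tt eps b' s' Hp J1 J2 ltac:(lra) Heq) as [F|F].
           ++ left. exists P1. split; auto. intros tj Htj. cbn in Htj. destruct Htj as [<-|[]]. exact F.
           ++ right. apply close_ii; auto; intros; congruence.
        -- destruct (He P2 J2). destruct (fitFT p J tt eps b' s' Hp J1 J2 ltac:(lra) Heq) as [F|F].
           ++ left. exists P2. split; auto. intros tj Htj. cbn in Htj. destruct Htj as [<-|[]]. exact F.
           ++ right. apply close_ii; auto; intros; congruence.
        -- exfalso. destruct j; congruence.
  - intros c1 c2. unfold agg, mu0. cbn [Esum Dinc].
    unfold sum4, ow, played, obsf, b0, s0, mk. destruct c1, c2; cbn; ring.
Qed.
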